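(* Let $(A_1,\dots,A_n)$ and $(B_1,\dots,B_m)$ be nonempty sequences of words, and let $(g_1,\dots,g_r)$ and $(h_1,\dots,h_t)$ be the $n$-bounded, respectively $m$-bounded, index collections maximal for them. Let $k=\max(\{0\}\cup\{i\mid 1\le i\le r,\ B_{h_1}\precsim A_{g_i}\})$. Then the $(n+m)$-bounded index collection $(g_1,\dots,g_k,n+h_1,\dots,n+h_t)$ is maximal for the sequence $(A_1,\dots,A_n,B_1,\dots,B_m)$.
   Context: Words are finite strings over $\mathbb{N}$; $\Lambda$ is the empty word. For $k\in\mathbb{N}$, $\mathsf{S}_k$ is the set of words all of whose symbols are $\ge k$. Given a linear preorder $\precsim$ with $A\sim B$ iff $A\precsim B\wedge B\precsim A$ and $A\prec B$ iff $A\precsim B\wedge\neg B\precsim A$, a finite sequence $(A_1,\dots,A_p)$ is lexicographically not greater than $(B_1,\dots,B_q)$ iff either $p\le q$ and $A_i\sim B_i$ for all $i\le p$, or there is $s<\min(p,q)$ with $A_i\sim B_i$ for $i\le s$ and $A_{s+1}\prec B_{s+1}$. A lexicographically maximal subsequence of a finite sequence is a subsequence that is lexicographically not less than every subsequence. The linear preorder $\precsim$ on words is defined by recursion on (largest symbol of $AB$) $-$ (smallest symbol of $AB$): $\Lambda\precsim\Lambda$; if $AB$ is nonempty with minimal symbol $n$, write uniquely $A=A_1n\cdots nA_k$, $B=B_1n\cdots nB_l$ ($k,l\ge1$) with $A_i,B_j\in\mathsf{S}_{n+1}$ (possibly empty); let $C,D$ be lexicographically maximal subsequences of $(A_1,\dots,A_k)$,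 $(B_1,\dots,B_l)$; then $A\precsim B$ iff $C$ is lexicographically not greater than $D$. An index collection is a strictly increasing finite sequence of positive integers; it is $n$-bounded if all entries are $\le n$; it is maximal for $(A_1,\dots,A_n)$ if $(A_{s_1},\dots,A_{s_m})$ is a lexicographically maximal subsequence of $(A_1,\dots,A_n)$. For a nonempty sequence there is exactly one maximal index collection. *)

(* Defs.v *)
From mathcomp Require Import all_boot.
Set Implicit Arguments. Unset Strict Implicit. Unset Printing Implicit Defensive.

Definition word := seq nat.

Section Lex.
Variable T : Type.
Variable le : T -> T -> Prop.
Definition sim (x y : T) : Prop := le x y /\ le y x.
Definition ltp (x y : T) : Prop := le x y /\ ~ le y x.

Definition lexle (x0 : T) (a b : seq T) : Prop :=
  (size a <= size b /\ forall i, i < size a -> sim (nth x0 a i) (nth x0 b i))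
  \/ exists s, s < minn (size a) (size b) /\
       (forall i, i < s -> sim (nth x0 a i) (nth x0 b i)) /\
       ltp (nth x0 a s) (nth x0 b s).
End Lex.

Definition lexmax (le : word -> word -> Prop) (c s : seq word) : Prop :=
  subseq c s /\ forall c', subseq c' s -> lexle le [::] c' c.

(* Split a word at all occurrences of the symbol n:
   A = A_1 n A_2 n ... n A_k  gives [:: A_1; ...; A_k]. *)
Fixpoint split_at (n : nat) (s : word) : seq word :=
  match s with
  | [::] => [:: [::]]
  | x :: s' =>
      if x == n then [::] :: split_at n s'
      else match split_at n s' with
           | c :: cs => (x :: c) :: cs
           | [::] => [:: [:: x]]
           end
  end.

Definition minsym (s : word) : nat := foldr minn (head 0 s) s.
Definition maxsym (s : word) : nat := foldr maxn 0 s.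

(* The recursive definition of the preorder, with fuel standing for the
   recursion on (largest symbol) - (smallest symbol) of AB. *)
Fixpoint wle_f (f : nat) (A B : word) : Prop :=
  match f with
  | 0 => True
  | f'.+1 =>
      match A ++ B with
      | [::] => True
      | _ =>
        let n := minsym (A ++ B) in
        exists C D,
          lexmax (wle_f f') C (split_at n A) /\
          lexmax (wle_f f') D (split_at n B) /\
          lexle (wle_f f') [::] C D
      end
  end.

(* A ≾ B; the fuel (max - min) + 1 is sufficient for the recursion. *)
Definition wle (A B : word) : Prop :=
  wle_f (maxsym (A ++ B) - minsym (A ++ B)).+1 A B.

(* g is an index collection (1-based, strictly increasing, positive),
   bounded by size s, and maximal for the sequence s. *)
Definition max_index_coll (s : seq word) (g : seq nat) : Prop :=
  sorted ltn g /\ all (fun i => 0 < i <= size s) g /\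
  lexmax wle [seq nth [::] s i.-1 | i <- g] s.

(* Classical boolean reflection of a proposition (used to form the max in
   the statement). *)
From Stdlib Require Import ClassicalEpsilon.
Definition asb (P : Prop) : bool :=
  if excluded_middle_informative P then true else false.

(* Main.v *)
Require Import Defs.
From mathcomp Require Import all_boot.
From Stdlib Require Import Classical ClassicalEpsilon.
Set Implicit Arguments. Unset Strict Implicit. Unset Printing Implicit Defensive.

Lemma asbP (P : Prop) : reflect P (asb P).
Proof. rewrite /asb; case: excluded_middle_informative => H; by constructor. Qed.

Section Lex0.
Variable le : word -> word -> Prop.

Lemma lexle_nil b : lexle le [::] [::] b.
Proof. by left; split. Qed.

Lemma lexle_cons_nil x a : ~ lexle le [::] (x :: a) [::].
Proof. by case=> [[]|[s [H _]]]. Qed.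

Lemma lexle_cons x a y b : lexle le [::] (x::a) (y::b) <->
  ltp le x y \/ (sim le x y /\ lexle le [::] a b).
Proof.
split.
- case=> [[Hs Hi]|[s [Hs [Hi Hl]]]].
  + right; split; first exact: (Hi 0).
    left; split => // i Hi'. exact: (Hi i.+1).
  + case: s Hs Hi Hl => [|s] Hs Hi Hl; first by left.
    right; split; first exact: (Hi 0).
    right; exists s; split; first by rewrite minnSS ltnS in Hs.
    split => // i Hi'. exact: (Hi i.+1).
- case=> [H|[Hsim [[Hs Hi]|[s [Hs [Hi Hl]]]]]].
  + by right; exists 0; split => //; rewrite minnSS.
  + left; split => // -[|i] Hi' //. exact: Hi.
  + right; exists s.+1; split; first by rewrite minnSS ltnS.
    split => // -[|i] Hi' //. exact: Hi.
Qed.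

Definition step (x : word) (l : seq word) : seq word :=
  match l with
  | [::] => [:: x]
  | y :: _ => if asb (le y x) then x :: l else l
  end.
Definition lm (s : seq word) := foldr step [::] s.

Lemma lm_cons x s : lm (x :: s) = step x (lm s).
Proof. by []. Qed.

Lemma lm_subseq s : subseq (lm s) s.
Proof.
elim: s => [|x s IH] //; rewrite lm_cons /step.
case E: (lm s) => [|y l]; first by rewrite /= eqxx sub0seq.
case: asbP => _; first by rewrite /= eqxx -E.
apply: subseq_trans (subseq_cons s x); by rewrite -E.
Qed.

Lemma lm_nil s : lm s = [::] -> s = [::].
Proof.
case: s => [|x s] //=; rewrite /step; case: (lm s) => [|y l] //.
by case: asbP.
Qed.

Definition psim (a b : seq word) :=
  size a = size b /\ forall i, i < size a -> sim le (nth [::] a i) (nth [::] b i).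

Lemma psim_lexle a b : psim a b -> lexle le [::] a b.
Proof. by case=> Hs Hi; left; split; [rewrite Hs|exact: Hi]. Qed.

Lemma lexle2_psim a b : lexle le [::] a b -> lexle le [::] b a -> psim a b.
Proof.
elim: a b => [|x a IH] [|y b] //.
- by move=> _ /lexle_cons_nil.
- by move=> /lexle_cons_nil.
move=> /lexle_cons H1 /lexle_cons H2.
have [Hs Hr] : sim le x y /\ lexle le [::] a b.
  case: H1 => [[h1 h2]|//]; exfalso.
  by case: H2 => [[h3 _]|[[h3 _] _]]; apply: h2.
have [Hs' Hr'] : sim le y x /\ lexle le [::] b a.
  case: H2 => [[h1 h2]|//]; exfalso. by case: Hs.
case: (IH b Hr Hr') => Hsz Hi; split; first by rewrite /= Hsz.
by case=> [|i] //= /Hi.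
Qed.

Lemma psim_cat a b c d : psim a b -> psim c d -> psim (a ++ c) (b ++ d).
Proof.
case=> s1 h1 [s2 h2]; split; first by rewrite !size_cat s1 s2.
move=> i; rewrite size_cat !nth_cat -s1 => Hi.
case: ifP => Hia; first exact: h1.
apply: h2; rewrite ltn_subLR //; by rewrite leqNgt Hia.
Qed.

Lemma psim_take k a b : psim a b -> psim (take k a) (take k b).
Proof.
case=> s1 h1; split; first by rewrite !size_take s1.
move=> i; rewrite size_take => Hi; rewrite !nth_take.
- apply: h1; apply: leq_trans Hi _; exact: geq_minr.
- apply: leq_trans Hi _; exact: geq_minl.
- apply: leq_trans Hi _; exact: geq_minl.
Qed.

Lemma lexmax_single X c : le X X -> (lexmax le c [:: X] <-> c = [:: X]).
Proof.
move=> hX; split.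
- case=> Hsub Hmax.
  have := Hmax [:: X] (subseq_refl _).
  case: c Hsub Hmax => [|y [|z c]].
  + by move=> _ _ /lexle_cons_nil.
  + by rewrite sub1seq mem_seq1 => /eqP ->.
  + by move=> /size_subseq.
- move=> ->; split; first exact: subseq_refl.
  case=> [|y [|z c0]]; first by move=> _; apply: lexle_nil.
  + rewrite sub1seq mem_seq1 => /eqP ->.
    apply/lexle_cons; right; split; [by split|exact: lexle_nil].
  + by move=> /size_subseq.
Qed.

Lemma lexle_single X Y : lexle le [::] [:: X] [:: Y] <-> le X Y.
Proof.
rewrite lexle_cons; split.
- by case=> [[]|[[]]].
- move=> H; case: (classic (le Y X)) => H'.
  + right; split; [by split|exact: lexle_nil].
  + by left.
Qed.
End Lex0.

Section LexS.
Variable le : word -> word -> Prop.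
Variable S : word -> Prop.
Hypothesis tot : forall x y, S x -> S y -> le x y \/ le y x.
Hypothesis tr : forall x y z, S x -> S y -> S z -> le x y -> le y z -> le x z.
Definition allS (s : seq word) := forall x, x \in s -> S x.

Lemma allS_cons x s : allS (x :: s) -> S x /\ allS s.
Proof. by move=> H; split => [|y Hy]; apply: H; rewrite inE ?eqxx ?Hy ?orbT. Qed.

Lemma allS_sub a b : subseq a b -> allS b -> allS a.
Proof. by move=> Hs H x Hx; apply: H; apply: (mem_subseq Hs). Qed.

Lemma refl x : S x -> le x x.
Proof. by move=> Sx; case: (tot Sx Sx). Qed.

Lemma lexle_refl a : allS a -> lexle le [::] a a.
Proof.
elim: a => [|x a IH] H; first exact: lexle_nil.
case/allS_cons: H => Sx Sa; apply/lexle_cons; right; split; last exact: IH.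
by split; apply: refl.
Qed.

Lemma lexle_total a b : allS a -> allS b -> lexle le [::] a b \/ lexle le [::] b a.
Proof.
elim: a b => [|x a IH] [|y b] Ha Hb; try by [left; apply: lexle_nil|right; apply: lexle_nil].
case/allS_cons: Ha => Sx Sa; case/allS_cons: Hb => Sy Sb.
case: (classic (le x y)) => Hxy; case: (classic (le y x)) => Hyx.
- case: (IH b Sa Sb) => H; [left|right]; apply/lexle_cons; right; split => //; by split.
- by left; apply/lexle_cons; left.
- by right; apply/lexle_cons; left.
- by case: (tot Sx Sy).
Qed.

Lemma lexle_trans a b c : allS a -> allS b -> allS c ->
  lexle le [::] a b -> lexle le [::] b c -> lexle le [::] a c.
Proof.
elim: a b c => [|x a IH] b c Ha Hb Hc; first by move=> _ _; apply: lexle_nil.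
case: b Hb => [|y b] Hb; first by move/lexle_cons_nil.
case: c Hc => [|z c] Hc; first by move=> _ /lexle_cons_nil.
case/allS_cons: Ha => Sx Sa; case/allS_cons: Hb => Sy Sb; case/allS_cons: Hc => Sz Sc.
move=> /lexle_cons H1 /lexle_cons H2; apply/lexle_cons.
case: H1 => [[h1 h2]|[[h1 h2] r1]]; case: H2 => [[h3 h4]|[[h3 h4] r2]].
- left; split; first exact: (tr Sx Sy Sz).
  move=> h; apply: h2; exact: (tr Sy Sz Sx).
- left; split; first exact: (tr Sx Sy Sz).
  move=> h; apply: h2; exact: (tr Sy Sz Sx).
- left; split; first exact: (tr Sx Sy Sz).
  move=> h; apply: h4; exact: (tr Sz Sx Sy).
- right; split; first by split; [exact: (tr Sx Sy Sz)|exact: (tr Sz Sy Sx)].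
  exact: (IH b c).
Qed.

Lemma lm_head s : allS s -> s <> [::] ->
  exists y l, lm le s = y :: l /\ S y /\ forall w, w \in s -> le w y.
Proof.
elim: s => [|x s IH] // H _; case/allS_cons: H => Sx Ss.
rewrite lm_cons /step.
case: s IH Ss => [|x' s'] IH Ss.
  exists x, [::]; split => //; split => // w; rewrite mem_seq1 => /eqP ->.
  exact: refl.
have Hne : x' :: s' <> [::] by [].
have [y [l [E [Sy Hw]]]] := IH Ss Hne.
rewrite E; case: asbP => Hyx.
- exists x, (y :: l); split => //; split => // w; rewrite inE => /orP[/eqP ->|Hws].
  + exact: refl.
  + apply: (tr _ Sy Sx) (Hw _ Hws) Hyx; exact: Ss.
- exists y, l; split => //; split => // w; rewrite inE => /orP[/eqP ->|Hws].
  + by case: (tot Sx Sy).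
  + exact: Hw.
Qed.

Lemma lm_lexmax s : allS s -> lexmax le (lm le s) s.
Proof.
move=> Hs; split; first exact: lm_subseq.
elim: s Hs => [|x s IH] Hs c'.
  by rewrite subseq0 => /eqP ->; apply: lexle_nil.
case/allS_cons: Hs => Sx Ss.
case: c' => [|y c''] Hsub; first exact: lexle_nil.
have Hsub' : subseq (if y == x then c'' else y :: c'') s by move: Hsub => /=.
rewrite lm_cons /step.
case E: (lm le s) => [|z l].
  move: (lm_nil E) Hsub' => ->; case: eqP => [->|] //.
  rewrite subseq0 => /eqP ->; apply/lexle_cons; right; split; last exact: lexle_nil.
  by split; apply: refl.
have Hne : s <> [::] by move=> h; move: E; rewrite h.
have [z' [l' [E' [Sz Hw]]]] := lm_head Ss Hne.
rewrite E in E'; case: E' => Ez _; subst z'.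
case: asbP => Hzx.
- case: eqP Hsub' => [-> Hc|Hyx Hc].
    apply/lexle_cons; right; split; first by split; apply: refl.
    by rewrite -E; apply: IH.
  have Hys : y \in s by apply: (mem_subseq Hc); rewrite inE eqxx.
  have Sy : S y by apply: Ss.
  have Hle : le y x by apply: (tr Sy Sz Sx) (Hw _ Hys) Hzx.
  apply/lexle_cons; case: (classic (le x y)) => Hxy; last by left.
  right; split; first by split.
  rewrite -E; apply: IH => //; apply: subseq_trans Hc; exact: subseq_cons.
- case: eqP Hsub' => [-> Hc|Hyx Hc].
    apply/lexle_cons; left; split => //.
    by case: (tot Sx Sz).
  by rewrite -E; apply: IH.
Qed.
End LexS.

Section Congr.
Variables le1 le2 : word -> word -> Prop.
Variable S : word -> Prop.
Hypothesis agree : forall x y, S x -> S y -> (le1 x y <-> le2 x y).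

Lemma lexle_congr a b : allS S a -> allS S b -> (lexle le1 [::] a b <-> lexle le2 [::] a b).
Proof.
elim: a b => [|x a IH] [|y b] Ha Hb.
- by split=> _; apply: lexle_nil.
- by split=> _; apply: lexle_nil.
- by split=> /lexle_cons_nil.
case/allS_cons: Ha => Sx Sa; case/allS_cons: Hb => Sy Sb.
rewrite !lexle_cons /ltp /sim (agree Sx Sy) (agree Sy Sx) (IH b Sa Sb).
by [].
Qed.

Lemma lexmax_congr c s : allS S s -> (lexmax le1 c s <-> lexmax le2 c s).
Proof.
move=> Hs; rewrite /lexmax; split; case=> Hc H; split => // c' Hc';
  (have Sc' : allS S c' by apply: allS_sub Hs);
  (have Sc : allS S c by apply: allS_sub Hs).
- by rewrite -lexle_congr //; apply: H.
- by rewrite lexle_congr //; apply: H.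
Qed.
End Congr.

Definition inS (lo hi : nat) (X : word) := forall z, z \in X -> lo <= z <= hi.

Lemma split_mem n X p : p \in split_at n X -> forall z, z \in p -> z \in X /\ z != n.
Proof.
elim: X p => [|x X IH] p /=.
  by rewrite mem_seq1 => /eqP ->.
case: ifP => Hx.
  rewrite inE => /orP[/eqP -> //|Hp] z Hz.
  by case: (IH p Hp z Hz) => h1 h2; rewrite inE h1 orbT.
case E: (split_at n X) => [|c cs].
  rewrite mem_seq1 => /eqP -> z; rewrite mem_seq1 => /eqP ->.
  by rewrite inE eqxx Hx.
rewrite inE => /orP[/eqP ->|Hp] z.
  rewrite inE => /orP[/eqP ->|Hz]; first by rewrite inE eqxx Hx.
  have : c \in split_at n X by rewrite E inE eqxx.
  by move=> /IH /(_ z Hz) [h1 h2]; rewrite inE h1 orbT.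
have : p \in split_at n X by rewrite E inE Hp orbT.
by move=> /IH /(_ z) H Hz; case: (H Hz) => h1 h2; rewrite inE h1 orbT.
Qed.

Lemma split_notin n X : n \notin X -> split_at n X = [:: X].
Proof.
elim: X => [|x X IH] //=; rewrite inE negb_or => /andP[Hx HX].
by rewrite eq_sym (negbTE Hx) IH.
Qed.

Lemma foldr_minn_le d s z : z \in d :: s -> foldr minn d s <= z.
Proof.
elim: s => [|x s IH] /=; first by rewrite mem_seq1 => /eqP ->.
rewrite !inE => /or3P[Hz|Hz|Hz]; rewrite geq_min.
- by rewrite IH ?orbT // inE Hz.
- by rewrite (eqP Hz) leqnn.
- by rewrite IH ?orbT // inE Hz orbT.
Qed.

Lemma foldr_minn_in d s : foldr minn d s \in d :: s.
Proof.
elim: s => [|x s IH] /=; first by rewrite inE eqxx.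
rewrite /minn; case: ifP => _; first by rewrite !inE eqxx orbT.
move: IH; rewrite !inE => /orP[->|->]; by rewrite ?orbT.
Qed.

Lemma minsym_le s z : z \in s -> minsym s <= z.
Proof.
case: s => [|x s] // Hz; apply: (@foldr_minn_le x (x :: s)).
by rewrite inE Hz orbT.
Qed.

Lemma minsym_in s : s != [::] -> minsym s \in s.
Proof.
case: s => [|x s] // _.
have := foldr_minn_in x (x :: s); rewrite inE => /orP[/eqP H|//].
by rewrite /minsym /= -/(foldr minn x (x :: s)) H inE eqxx.
Qed.

Lemma maxsym_ge s z : z \in s -> z <= maxsym s.
Proof.
elim: s => [|x s IH] //=; rewrite inE => /orP[/eqP ->|Hz]; rewrite leq_max ?leqnn //.
by rewrite IH ?orbT.
Qed.

Lemma maxsym_le s hi : (forall z, z \in s -> z <= hi) -> maxsym s <= hi.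
Proof.
elim: s => [|x s IH] //= H; rewrite geq_max H ?inE ?eqxx //=.
by apply: IH => z Hz; apply: H; rewrite inE Hz orbT.
Qed.

Definition Lr F m X Y := exists CX CY, lexmax (wle_f F) CX (split_at m X) /\
  lexmax (wle_f F) CY (split_at m Y) /\ lexle (wle_f F) [::] CX CY.

Lemma wle_f_S F X Y : wle_f F.+1 X Y <-> (X ++ Y = [::] \/ Lr F (minsym (X ++ Y)) X Y).
Proof.
rewrite /= /Lr; case: (X ++ Y) => [|z w].
  by split => _; [left|].
split => [H|[//|H]]; [by right|exact H].
Qed.

From mathcomp Require Import zify.
From Stdlib Require Import Setoid Lia.

Definition Qf f := forall lo hi, hi < lo + f ->
  (forall X Y f', inS lo hi X -> inS lo hi Y -> f <= f' -> (wle_f f' X Y <-> wle_f f X Y)) /\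
  (forall X Y, inS lo hi X -> inS lo hi Y -> wle_f f X Y \/ wle_f f Y X) /\
  (forall X Y Z, inS lo hi X -> inS lo hi Y -> inS lo hi Z ->
     wle_f f X Y -> wle_f f Y Z -> wle_f f X Z).

Lemma key f lo hi F m X Y : Qf f -> hi < lo + f.+1 -> f <= F -> lo <= m ->
  inS m hi X -> inS m hi Y -> (wle_f F.+1 X Y <-> Lr F m X Y).
Proof.
move=> Hq Hlh HF Hm HX HY.
have [FI [Tot _]] := Hq m.+1 hi (ltac:(lia)).
case: (boolP (m \in X ++ Y)) => Hin.
- have Hne : X ++ Y != [::] by move: Hin; case: (X ++ Y).
  have Hmin : minsym (X ++ Y) = m.
    apply/eqP; rewrite eqn_leq minsym_le //=.
    have := minsym_in Hne; rewrite mem_cat => /orP[h|h].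
    + by case/andP: (HX _ h).
    + by case/andP: (HY _ h).
  rewrite wle_f_S Hmin; split => [[E|//]|H]; [by rewrite E in Hin|by right].
- rewrite mem_cat negb_or in Hin; case/andP: Hin => HmX HmY.
  have up : forall Z, m \notin Z -> inS m hi Z -> inS m.+1 hi Z.
    move=> Z HmZ HZ z Hz; have /andP[h1 h2] := HZ z Hz.
    rewrite h2 andbT ltn_neqAle h1 andbT; apply/eqP => E.
    by move: HmZ; rewrite E Hz.
  have HX' := up X HmX HX; have HY' := up Y HmY HY.
  have rX : wle_f F X X by rewrite FI //; case: (Tot X X HX' HX').
  have rY : wle_f F Y Y by rewrite FI //; case: (Tot Y Y HY' HY').
  have E1 : wle_f F.+1 X Y <-> wle_f F X Y.
    rewrite FI //; last by lia. by rewrite (FI X Y F).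
  rewrite /Lr !split_notin // E1; split.
  + move=> H; exists [:: X], [:: Y]; split; first exact/lexmax_single.
    split; first exact/lexmax_single. exact/lexle_single.
  + case=> CX [CY [h1 [h2 h3]]].
    move/(lexmax_single _ rX): h1 => h1; move/(lexmax_single _ rY): h2 => h2.
    subst; exact/lexle_single.
Qed.

Lemma Qstep f : Qf f -> Qf f.+1.
Proof.
move=> Hq lo hi Hlh.
have [FI0 [Tot0 Tr0]] := Hq lo.+1 hi (ltac:(lia)).
have pieces : forall X, inS lo hi X -> allS (inS lo.+1 hi) (split_at lo X).
  move=> X HX p Hp z Hz; case: (split_mem Hp Hz) => h1 h2.
  have /andP[a b] := HX z h1.
  by rewrite b andbT ltn_neqAle eq_sym h2 a.
have K : forall F X Y, f <= F -> inS lo hi X -> inS lo hi Y ->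
    (wle_f F.+1 X Y <-> Lr F lo X Y).
  by move=> F X Y HF HX HY; apply: (key Hq Hlh HF (leqnn lo) HX HY).
have congrL : forall F X Y, f <= F -> inS lo hi X -> inS lo hi Y ->
    (Lr F lo X Y <-> Lr f lo X Y).
  move=> F X Y HF HX HY.
  have agree : forall x y, inS lo.+1 hi x -> inS lo.+1 hi y ->
      (wle_f F x y <-> wle_f f x y) by move=> x y hx hy; apply: FI0.
  rewrite /Lr; split; case=> CX [CY [h1 [h2 h3]]]; exists CX, CY.
  - have SX := allS_sub h1.1 (pieces X HX); have SY := allS_sub h2.1 (pieces Y HY).
    rewrite -(lexmax_congr agree _ (pieces X HX)) -(lexmax_congr agree _ (pieces Y HY)).
    by rewrite -(lexle_congr agree SX SY).
  - have SX := allS_sub h1.1 (pieces X HX); have SY := allS_sub h2.1 (pieces Y HY).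
    rewrite (lexmax_congr agree _ (pieces X HX)) (lexmax_congr agree _ (pieces Y HY)).
    by rewrite (lexle_congr agree SX SY).
split; [|split].
- move=> X Y f' HX HY; case: f' => [//|F] HF.
  rewrite (K F X Y) // (K f X Y) //; exact: congrL.
- move=> X Y HX HY; rewrite (K f X Y) // (K f Y X) //.
  have mX := lm_lexmax Tot0 Tr0 (pieces X HX).
  have mY := lm_lexmax Tot0 Tr0 (pieces Y HY).
  have SX := allS_sub mX.1 (pieces X HX); have SY := allS_sub mY.1 (pieces Y HY).
  case: (lexle_total Tot0 SX SY) => H; [left|right]; eexists; eexists; split; eauto.
- move=> X Y Z HX HY HZ; rewrite (K f X Y) // (K f Y Z) // (K f X Z) //.
  case=> c [d [hc [hd hcd]]] [d' [e [hd' [he hde]]]].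
  exists c, e; split => //; split => //.
  have Sc := allS_sub hc.1 (pieces X HX); have Sd := allS_sub hd.1 (pieces Y HY).
  have Sd' := allS_sub hd'.1 (pieces Y HY); have Se := allS_sub he.1 (pieces Z HZ).
  have hdd : lexle (wle_f f) [::] d d' by apply: hd'.2; exact: hd.1.
  apply: (lexle_trans Tr0 Sc Sd Se hcd).
  exact: (lexle_trans Tr0 Sd Sd' Se hdd hde).
Qed.

Lemma Q0 : Qf 0.
Proof.
move=> lo hi Hlh.
have E : forall X, inS lo hi X -> X = [::].
  case=> // z X H; have /andP[a b] := H z (mem_head _ _); lia.
split; [|split] => //.
- move=> X Y f' HX HY _; rewrite (E X HX) (E Y HY); case: f' => //.
- by move=> X Y _ _; left.
Qed.

Lemma Qall f : Qf f.
Proof. elim: f => [|f IH]; [exact: Q0|exact: Qstep]. Qed.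

Lemma wle_fuel X Y lo hi F : inS lo hi X -> inS lo hi Y -> hi < lo + F ->
  (wle X Y <-> wle_f F X Y).
Proof.
move=> HX HY HF.
case E: (X ++ Y) => [|z w].
  case: X Y E HX HY => [|??] [|??] // _ _ _.
  by rewrite /wle; case: F HF.
have Hne : X ++ Y != [::] by rewrite E.
have Hin := minsym_in Hne.
have Hlo : lo <= minsym (X ++ Y).
  move: Hin; rewrite mem_cat => /orP[h|h].
  + by case/andP: (HX _ h).
  + by case/andP: (HY _ h).
have Hmx : maxsym (X ++ Y) <= hi.
  apply: maxsym_le => z' /[!mem_cat] /orP[h|h].
  + by case/andP: (HX _ h).
  + by case/andP: (HY _ h).
have Hmm : minsym (X ++ Y) <= maxsym (X ++ Y) by apply: maxsym_ge.
have HX' : inS (minsym (X ++ Y)) (maxsym (X ++ Y)) X.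
  by move=> z' h; rewrite minsym_le ?maxsym_ge // mem_cat h.
have HY' : inS (minsym (X ++ Y)) (maxsym (X ++ Y)) Y.
  by move=> z' h; rewrite minsym_le ?maxsym_ge // mem_cat h orbT.
have [FI _] := @Qall (maxsym (X ++ Y) - minsym (X ++ Y)).+1 (minsym (X ++ Y)) (maxsym (X ++ Y)) (ltac:(lia)).
rewrite /wle; symmetry; apply: FI => //; lia.
Qed.

Lemma wle_total X Y : wle X Y \/ wle Y X.
Proof.
have HX : inS 0 (maxsym (X ++ Y)) X by move=> z h; rewrite maxsym_ge // mem_cat h.
have HY : inS 0 (maxsym (X ++ Y)) Y by move=> z h; rewrite maxsym_ge // mem_cat h orbT.
have Hl : maxsym (X ++ Y) < 0 + (maxsym (X ++ Y)).+1 by rewrite add0n.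
rewrite (wle_fuel HX HY Hl) (wle_fuel HY HX Hl).
have [_ [Tot _]] := @Qall _ _ _ Hl.
exact: Tot.
Qed.

Lemma wle_trans X Y Z : wle X Y -> wle Y Z -> wle X Z.
Proof.
set hi := maxsym (X ++ Y ++ Z).
have HX : inS 0 hi X by move=> z h; rewrite maxsym_ge // !mem_cat h.
have HY : inS 0 hi Y by move=> z h; rewrite maxsym_ge // !mem_cat h orbT.
have HZ : inS 0 hi Z by move=> z h; rewrite maxsym_ge // !mem_cat h !orbT.
have Hl : hi < 0 + hi.+1 by rewrite add0n.
rewrite (wle_fuel HX HY Hl) (wle_fuel HY HZ Hl) (wle_fuel HX HZ Hl).
have [_ [_ Tr]] := @Qall _ _ _ Hl.
exact: Tr.
Qed.

Lemma asbT (P : Prop) : P -> asb P = true.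
Proof. by move=> h; apply/asbP. Qed.
Lemma asbF (P : Prop) : ~ P -> asb P = false.
Proof. by move=> h; apply/asbP. Qed.

Section Main.
Let le := wle.
Let S := fun _ : word => True.
Lemma tot' x y : S x -> S y -> wle x y \/ wle y x.
Proof. by move=> _ _; apply: wle_total. Qed.
Lemma tr' x y z : S x -> S y -> S z -> wle x y -> wle y z -> wle x z.
Proof. by move=> _ _ _; apply: wle_trans. Qed.
Lemma allT s : allS S s. Proof. by []. Qed.
Lemma wrefl x : wle x x. Proof. by case: (wle_total x x). Qed.

Definition R := fun x y => asb (wle y x).
Lemma R_trans : ssrbool.transitive R.
Proof. move=> y x z /asbP h1 /asbP h2; apply/asbP; exact: wle_trans h2 h1. Qed.

Lemma lm_sorted s : sorted R (lm wle s).
Proof.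
elim: s => [|x s IH] //; rewrite lm_cons /step.
case E: (lm wle s) => [|y l] //.
case: asbP => H; last by rewrite -E.
by rewrite /= -/(sorted R (y :: l)) -E IH andbT /R; apply/asbP.
Qed.

Lemma lm_decomp s z B : (forall w, w \in B -> wle w z) ->
  foldr (step wle) (z :: B) s = filter (fun x => asb (wle z x)) (lm wle s) ++ z :: B.
Proof.
move=> HB; elim: s => [|x s IH] //.
rewrite /= IH -/(foldr (step wle) [::] s) -/(lm wle s).
have := lm_sorted s.
case E: (lm wle s) => [|y l] Hs; first by rewrite /step /=; case: asbP.
have Hl : forall w, w \in l -> wle w y.
  move: Hs => /= /(order_path_min R_trans) /allP H w /H; by move/asbP.
case: (asbP (wle z y)) => Hzy.
- rewrite /= /step /= (asbT Hzy); case: (asbP (wle y x)) => Hyx /=.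
  + by rewrite (asbT Hyx) (asbT (wle_trans Hzy Hyx)) (asbT Hzy).
  + by rewrite (asbF Hyx) (asbT Hzy).
- have Fl : filter (fun x => asb (wle z x)) l = [::].
    apply/eqP; rewrite -[_ == _]negbK -has_filter; apply/hasPn => w Hw.
    apply/asbP => Hzw; apply: Hzy; exact: wle_trans Hzw (Hl w Hw).
  have Hyz : wle y z by case: (wle_total z y).
  rewrite /= /step /= (asbF Hzy) Fl /=; case: (asbP (wle y x)) => Hyx /=.
  + by rewrite (asbF Hzy) Fl; case: (asbP (wle z x)).
  + rewrite (asbF Hzy) Fl /=.
    case: (asbP (wle z x)) => Hzx //.
    by exfalso; apply: Hyx; apply: wle_trans Hyz Hzx.
Qed.

Lemma filter_take (q : pred word) L : sorted R L ->
  (forall x y, q x -> wle x y -> q y) ->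
  filter q L = take (size (filter q L)) L.
Proof.
move=> Hs Hq; elim: L Hs => [|y l IH] Hs //.
have Hl : forall w, w \in l -> wle w y.
  move: Hs => /= /(order_path_min R_trans) /allP H w /H; by move/asbP.
have Hsl : sorted R l by move: Hs => /= /path_sorted.
rewrite /=; case: ifP => Hy /=; first by rewrite -IH.
have -> : filter q l = [::].
  apply/eqP; rewrite -[_ == _]negbK -has_filter; apply/hasPn => w Hw.
  by apply/negP => Hqw; move: (Hq _ _ Hqw (Hl w Hw)); rewrite Hy.
by [].
Qed.

Lemma nth_filter_take (q : pred word) L i : filter q L = take (size (filter q L)) L ->
  i < size L -> q (nth [::] L i) = (i < size (filter q L)).
Proof.
set kk := size (filter q L) => FT Hi.
case: (ltnP i kk) => Hik.
  have E : nth [::] L i = nth [::] (filter q L) i by rewrite FT nth_take.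
  rewrite E; have := mem_nth [::] Hik.
  by rewrite mem_filter => /andP[-> _].
apply/negP => Hq.
have Hc : count q (drop kk L) = 0.
  have h1 : count q L = kk by rewrite -size_filter.
  have h2 : count q (take kk L) = kk by rewrite -FT -size_filter filter_id.
  have := count_cat q (take kk L) (drop kk L); rewrite cat_take_drop h1 h2; lia.
have : has q (drop kk L).
  apply/hasP; exists (nth [::] L i) => //.
  have -> : nth [::] L i = nth [::] (drop kk L) (i - kk) by rewrite nth_drop subnKC.
  by rewrite mem_nth // size_drop ltn_sub2r // (leq_ltn_trans Hik Hi).
by rewrite has_count Hc.
Qed.

Lemma bigmax_prefix n kk : kk <= n -> \max_(1 <= i < n.+1 | i <= kk) i = kk.
Proof.
move=> Hk; apply/eqP; rewrite eqn_leq; apply/andP; split.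
  by apply/bigmax_leqP_seq => i _.
case: kk Hk => [|kk] Hk //.
by apply: leq_bigmax_seq => //; rewrite mem_index_iota; lia.
Qed.
End Main.

Theorem lemma2 (As Bs : seq word) (g h : seq nat) :
  As != [::] -> Bs != [::] ->
  max_index_coll As g -> max_index_coll Bs h ->
  let k := \max_(1 <= i < (size g).+1 |
                 asb (wle (nth [::] Bs (nth 0 h 0).-1) (nth [::] As (nth 0 g i.-1).-1))) i in
  max_index_coll (As ++ Bs) (take k g ++ [seq size As + j | j <- h]).
Proof.
move=> HA HB [sg [bg mg]] [sh [bh mh]] k.
set a := [seq nth [::] As i.-1 | i <- g] in mg *.
set b := [seq nth [::] Bs i.-1 | i <- h] in mh *.
have lA := lm_lexmax tot' tr' (@allT As).
have lB := lm_lexmax tot' tr' (@allT Bs).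
have pa : psim wle (lm wle As) a := lexle2_psim (mg.2 _ lA.1) (lA.2 _ mg.1).
have pb : psim wle (lm wle Bs) b := lexle2_psim (mh.2 _ lB.1) (lB.2 _ mh.1).
have HBne : Bs <> [::] by move=> E; move: HB; rewrite E.
have [y [l [EB [_ Hy]]]] := lm_head tot' tr' (@allT Bs) HBne.
have Hl : forall w, w \in l -> wle w y.
  have := lm_sorted Bs; rewrite EB.
  move=> /= /(order_path_min R_trans) /allP H w /H; by move/asbP.
set q := fun x => asb (wle y x).
have Edec : lm wle (As ++ Bs) = filter q (lm wle As) ++ lm wle Bs.
  by rewrite {1}/lm foldr_cat -/(lm wle Bs) EB (lm_decomp As Hl).
set kk := size (filter q (lm wle As)).
have FT : filter q (lm wle As) = take kk (lm wle As).
  apply: filter_take (lm_sorted As) _ => x1 x2 /asbP h1 h2; apply/asbP.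
  exact: wle_trans h1 h2.
have sza : size a = size g by rewrite size_map.
have szb : size b = size h by rewrite size_map.
have szL : size (lm wle As) = size g by rewrite pa.1.
have szLB : size (lm wle Bs) = size h by rewrite pb.1.
have h0 : 0 < size h by rewrite -szLB EB.
have sY : sim wle y (nth [::] b 0) by have := pb.2 0; rewrite szLB EB; apply.
have Hkk : kk <= size g by rewrite -szL /kk size_filter count_size.
have hk : k = kk.
  have Hc : forall i, 1 <= i < (size g).+1 ->
      asb (wle (nth [::] Bs (nth 0 h 0).-1) (nth [::] As (nth 0 g i.-1).-1)) = (i <= kk).
    move=> i /andP[i1 i2].
    have Hi : i.-1 < size g by case: i i1 i2.
    have Eb : nth [::] Bs (nth 0 h 0).-1 = nth [::] b 0 by rewrite (nth_map 0).
    have Ea : nth [::] As (nth 0 g i.-1).-1 = nth [::] a i.-1 by rewrite (nth_map 0).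
    rewrite Eb Ea.
    have Hi' : i.-1 < size (lm wle As) by rewrite szL.
    have := nth_filter_take FT Hi'.
    have -> : (i <= kk) = (i.-1 < kk) by case: i i1 {i2 Hi Ea Hi'}.
    move=> <-.
    have sA : sim wle (nth [::] (lm wle As) i.-1) (nth [::] a i.-1) by apply: pa.2.
    case: sY => y1 y2; case: sA => a1 a2.
    apply/asbP/asbP => H.
    + exact: wle_trans y1 (wle_trans H a2).
    + exact: wle_trans y2 (wle_trans H a1).
  rewrite /k big_nat_cond.
  rewrite (eq_bigl (fun i => (1 <= i < (size g).+1) && (i <= kk))); last first.
    move=> i /=; case: (boolP (1 <= i < (size g).+1)) => //= Hi; exact: Hc.
  by rewrite -big_nat_cond bigmax_prefix.
rewrite hk.
have Ec : [seq nth [::] (As ++ Bs) i.-1 | i <- take kk g ++ [seq size As + j | j <- h]]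
    = take kk a ++ b.
  rewrite map_cat map_take -map_comp; congr (_ ++ _).
    congr (take _ _); rewrite /a; apply/eq_in_map => i Hi.
    have /andP[i1 i2] := allP bg i Hi.
    by rewrite nth_cat; case: i i1 i2 {Hi} => [|i] //= _ ->.
  rewrite /b; apply/eq_in_map => j Hj /=.
  have /andP[j1 j2] := allP bh j Hj.
  case: j j1 j2 {Hj} => [|j] //= _ _.
  by rewrite addnS /= nth_cat ltnNge leq_addr /= addKn.
split; [|split].
- rewrite sorted_pairwise; last exact: ltn_trans.
  rewrite pairwise_cat; apply/and3P; split.
  + apply/allrelP => x1 x2 Hx1 /mapP[j Hj ->].
    have /andP[_ a2] := allP bg x1 (mem_take Hx1).
    have /andP[b1 _] := allP bh j Hj.
    by apply: leq_trans (leq_ltn_trans a2 _) (leqnn _); rewrite -addn1 leq_add2l.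
  + rewrite -sorted_pairwise; last exact: ltn_trans.
    exact: take_sorted.
  + rewrite -sorted_pairwise; last exact: ltn_trans.
    rewrite sorted_map; apply: sub_sorted sh => x1 x2 /=; by rewrite ltn_add2l.
- rewrite all_cat; apply/andP; split.
  + apply/allP => x Hx; have /andP[x1 x2] := allP bg x (mem_take Hx).
    by rewrite x1 size_cat (leq_trans x2 (leq_addr _ _)).
  + apply/allP => _ /mapP[j Hj ->]; have /andP[j1 j2] := allP bh j Hj.
    by rewrite size_cat addn_gt0 j1 orbT leq_add2l.
- rewrite Ec; split.
    apply: cat_subseq; last exact: mh.1.
    exact: subseq_trans (take_subseq _ _) mg.1.
  move=> c' Hc'; have lAB := lm_lexmax tot' tr' (@allT (As ++ Bs)).
  apply: (lexle_trans tr' (@allT _) (@allT _) (@allT _) (lAB.2 _ Hc')).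
  rewrite Edec FT; apply: psim_lexle; apply: psim_cat => //; exact: psim_take.
Qed.
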